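(* Let $(\mathcal{A},e)$ be an order-unit space, $L$ a Lipschitz seminorm on $\mathcal{A}$ with metric $\rho_L$ on $S(\mathcal{A})$, and $r\ge 0$. The following are equivalent: (1) $\rho_L(\mu,\nu)\le 2r$ for all $\mu,\nu\in S(\mathcal{A})$; (2) $\|\tilde a\|^{\sim}\le r\tilde L(\tilde a)$ for all $a\in\mathcal{A}$.
   Context: An order-unit space is a real partially ordered vector space $\mathcal{A}$ with distinguished $e$ such that (i) for each $a$ there is $r$ with $a\le re$, and (ii) if $a\le re$ for all $r>0$ then $a\le0$; norm $\|a\|=\inf\{r\ge0:-re\le a\le re\}$ (not necessarily complete). States: continuous linear functionals $\mu$ with $\mu(e)=1=\|\mu\|$; $S(\mathcal{A})$ the set of states. A Lipschitz seminorm is a finite-valued seminorm $L$ with $L(a)=0$ iff $a\in\mathbb{R}e$; $\rho_L(\mu,\nu)=\sup\{|\mu(a)-\nu(a)|:L(a)\le1\}\in[0,\infty]$. For $a\in\mathcal{A}$, $\tilde a$ is its image in $\mathcal{A}/\mathbb{R}e$, $\|\tilde a\|^{\sim}=\inf_{t\in\mathbb{R}}\|a+te\|$ is the quotient norm, and $\tilde L(\tilde a)=\inf_t L(a+te)$ $(=L(a))$ is the quotient seminorm. *)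

(* Defs.v *)
From HB Require Import structures.
From mathcomp Require Import all_boot all_order all_algebra.
From mathcomp Require Import boolp classical_sets reals ereal.
Set Implicit Arguments. Unset Strict Implicit. Unset Printing Implicit Defensive.
Import Order.TTheory GRing.Theory Num.Theory.
Local Open Scope classical_set_scope.
Local Open Scope ring_scope.

Definition is_order_unit_space (R : realType) (V : lmodType R)
    (le : V -> V -> Prop) (e : V) : Prop :=
  (forall a, le a a) /\
  (forall a b, le a b -> le b a -> a = b) /\
  (forall a b c, le a b -> le b c -> le a c) /\
  (forall a b c, le a b -> le (a + c) (b + c)) /\
  (forall (t : R) a b, 0 <= t -> le a b -> le (t *: a) (t *: b)) /\
  (forall a, exists r : R, le a (r *: e)) /\
  (forall a, (forall r : R, 0 < r -> le a (r *: e)) -> le a 0).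

Definition ou_norm (R : realType) (V : lmodType R)
    (le : V -> V -> Prop) (e : V) (a : V) : R :=
  inf [set r : R | 0 <= r /\ le (- (r *: e)) a /\ le a (r *: e)].

Definition op_norm (R : realType) (V : lmodType R)
    (le : V -> V -> Prop) (e : V) (mu : V -> R) : R :=
  sup [set `|mu a| | a in [set a | ou_norm le e a <= 1]].

Definition is_state (R : realType) (V : lmodType R)
    (le : V -> V -> Prop) (e : V) (mu : V -> R) : Prop :=
  [/\ (forall a b, mu (a + b) = mu a + mu b),
      (forall (t : R) a, mu (t *: a) = t * mu a),
      (forall a (eps : R), 0 < eps -> exists2 delta : R, 0 < delta &
          forall b, ou_norm le e (b - a) < delta -> `|mu b - mu a| < eps),
      mu e = 1 &
      op_norm le e mu = 1].

Definition is_lip_seminorm (R : realType) (V : lmodType R)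
    (e : V) (L : V -> R) : Prop :=
  [/\ (forall a b, L (a + b) <= L a + L b),
      (forall (t : R) a, L (t *: a) = `|t| * L a) &
      (forall a, L a = 0 <-> exists t : R, a = t *: e)].

Definition rhoL (R : realType) (V : lmodType R) (L : V -> R)
    (mu nu : V -> R) : \bar R :=
  ereal_sup [set (`|mu a - nu a|)%:E | a in [set a | L a <= 1]].

Definition quot_norm (R : realType) (V : lmodType R)
    (le : V -> V -> Prop) (e : V) (a : V) : R :=
  inf [set ou_norm le e (a + t *: e) | t in [set: R]].

Definition quot_L (R : realType) (V : lmodType R) (e : V) (L : V -> R)
    (a : V) : R :=
  inf [set L (a + t *: e) | t in [set: R]].

(* Main.v *)
Require Import Defs.
From HB Require Import structures.
From mathcomp Require Import all_boot all_order all_algebra.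
From mathcomp Require Import boolp classical_sets reals ereal.
From mathcomp Require Import ring lra.
Import Order.TTheory GRing.Theory Num.Theory.
Local Open Scope ring_scope.
Local Open Scope classical_set_scope.
Set Implicit Arguments. Unset Strict Implicit.

Lemma inf_min (R : realType) (E : set R) (m : R) :
  E m -> (forall x, E x -> m <= x) -> inf E = m.
Proof.
move=> Em lb; apply/le_anti/andP; split.
  by apply: (ge_inf _ Em); exists m.
by apply: lb_le_inf; [exists m|].
Qed.

Section OU.
Variables (R : realType) (V : lmodType R) (le : V -> V -> Prop) (e : V).
Hypothesis ouH : is_order_unit_space le e.

Let lrefl : forall a, le a a. Proof. by case: ouH. Qed.
Let lanti : forall a b, le a b -> le b a -> a = b. Proof. by case: ouH => _ []. Qed.
Let ltrans : forall a b c, le a b -> le b c -> le a c. Proof. by case: ouH => _ [_ []]. Qed.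
Let ladd : forall a b c, le a b -> le (a + c) (b + c). Proof. by case: ouH => _ [_ [_ []]]. Qed.
Let lscale : forall (t : R) a b, 0 <= t -> le a b -> le (t *: a) (t *: b).
Proof. by case: ouH => _ [_ [_ [_ []]]]. Qed.
Let lub : forall a, exists r : R, le a (r *: e). Proof. by case: ouH => _ [_ [_ [_ [_ []]]]]. Qed.
Let larch : forall a, (forall r : R, 0 < r -> le a (r *: e)) -> le a 0.
Proof. by case: ouH => _ [_ [_ [_ [_ []]]]]. Qed.

Lemma ou_addl a b c : le a b -> le (c + a) (c + b).
Proof. by move=> h; rewrite ![c + _]addrC; apply: ladd. Qed.

Lemma ou_add2 a b c d : le a b -> le c d -> le (a + c) (b + d).
Proof. move=> h1 h2; exact: ltrans (ladd c h1) (ou_addl b h2). Qed.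

Lemma ou_opp a b : le a b -> le (- b) (- a).
Proof.
move=> h; have := ladd (- a - b) h.
by rewrite addrA subrr add0r addrCA subrr addr0.
Qed.

Lemma ou_oppE a b : le (- b) (- a) -> le a b.
Proof. by move/ou_opp; rewrite !opprK. Qed.

Lemma ou_sub0 a b : le a b -> le 0 (b - a).
Proof. by move=> h; have := ladd (- a) h; rewrite subrr. Qed.

Lemma ou_0sub a b : le 0 (b - a) -> le a b.
Proof. by move=> h; have := ladd a h; rewrite add0r subrK. Qed.

Section Nondeg.
Hypothesis e0 : le 0 e.
Hypothesis ne0 : ~ le e 0.

Lemma ou_scale_e (s t : R) : s <= t -> le (s *: e) (t *: e).
Proof.
move=> st; apply: ou_0sub; rewrite -scalerBl.
have := @lscale (t - s) 0 e; rewrite scaler0; apply => //; by rewrite subr_ge0.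
Qed.

Lemma ou_pos_e (r : R) : le 0 (r *: e) -> 0 <= r.
Proof.
move=> h; rewrite leNgt; apply/negP => r0.
apply: ne0; have hr : 0 <= (- r)^-1 by rewrite invr_ge0 oppr_ge0 ltW.
have h1 := lscale hr h.
rewrite scaler0 scalerA invrN mulNr mulVf ?ltr0_neq0 // scaleN1r in h1.
by have := ou_opp h1; rewrite opprK oppr0.
Qed.

Definition pp (b : V) : R := inf [set r | le b (r *: e)].

Lemma ppP b r : le b (r *: e) <-> pp b <= r.
Proof.
split.
  move=> h; apply: (ge_inf _ h).
  have [q hq] := lub (- b); exists (- q) => s hs.
  have := ou_add2 hq hs; rewrite addNr -scalerDl => /ou_pos_e.
  by move=> h0; rewrite -subr_ge0 opprK addrC.
move=> h.
suff : le (b - r *: e) 0 by move=> H; have := ladd (r *: e) H; rewrite subrK add0r.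
apply: larch => eps eps0.
have : pp b < r + eps by rewrite ltr_pwDr.
case/inf_lt; first by have [q hq] := lub b; exists q.
move=> s hs lts; have h1 := ltrans hs (ou_scale_e (ltW lts)).
have := ladd (- (r *: e)) h1; by rewrite -scaleNr -scalerDl addrAC subrr add0r scaleNr.
Qed.

Lemma pp_le b : le b (pp b *: e).
Proof. by apply/ppP. Qed.

Lemma pp_char b m : (forall r, m <= r <-> le b (r *: e)) -> pp b = m.
Proof.
move=> h; apply/le_anti/andP; split.
  by apply/ppP/h.
by apply/h/pp_le.
Qed.

Lemma ppD b c : pp (b + c) <= pp b + pp c.
Proof. apply/ppP; rewrite scalerDl; apply: ou_add2; exact: pp_le. Qed.

Lemma ppZ (t : R) b : 0 < t -> pp (t *: b) = t * pp b.
Proof.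
move=> t0; apply: pp_char => r; rewrite -ler_pdivlMl //; split.
  move/ppP => h; have := lscale (ltW t0) h.
  by rewrite scalerA mulrA mulfV ?gt_eqF // mul1r.
move=> h; apply/ppP.
have := lscale (t := t^-1) _ h; rewrite scalerA mulVf ?gt_eqF // scale1r scalerA.
by apply; rewrite invr_ge0 ltW.
Qed.

Lemma pp_shift b t : pp (b + t *: e) = pp b + t.
Proof.
apply: pp_char => r; rewrite -lerBrDr; split.
  move/ppP => h; have := ladd (t *: e) h; by rewrite -scalerDl subrK.
move=> h; apply/ppP; have := ladd (- (t *: e)) h.
by rewrite addrK -scaleNr -scalerDl.
Qed.

Lemma pp0 : pp 0 = 0.
Proof.
apply: pp_char => r; split.
  by move=> r0; have := lscale r0 e0; rewrite scaler0.
exact: ou_pos_e.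
Qed.

Lemma pp_e t : pp (t *: e) = t.
Proof. by have := pp_shift 0 t; rewrite add0r pp0 add0r. Qed.

Lemma pp_sum b : 0 <= pp b + pp (- b).
Proof. by rewrite -pp0 -(subrr b); apply: ppD. Qed.

Definition NN b := Num.max (pp b) (pp (- b)).

Lemma NN_ge0 b : 0 <= NN b.
Proof.
have := pp_sum b; rewrite /NN; case: (leP (pp b) (pp (- b))) => h s.
  rewrite -(ler_pM2l (ltr0n _ 2)) mulr0 mulr2n mulrDl mul1r.
  by apply: (le_trans s); rewrite lerD2r.
rewrite -(ler_pM2l (ltr0n _ 2)) mulr0 mulr2n mulrDl mul1r.
by apply: (le_trans s); rewrite lerD2l ltW.
Qed.

Lemma ou_normE b : ou_norm le e b = NN b.
Proof.
apply: inf_min.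
  split; first exact: NN_ge0.
  split; last by apply/ppP; rewrite le_max lexx.
  by apply: ou_oppE; rewrite opprK; apply/ppP; rewrite le_max lexx orbT.
move=> x [_ [h1 h2]]; rewrite ge_max; apply/andP; split; apply/ppP => //.
by apply: ou_oppE; rewrite opprK.
Qed.


Lemma pp_neg_shift b t : pp (- (b + t *: e)) = pp (- b) - t.
Proof. by rewrite opprD -scaleNr pp_shift. Qed.

Lemma quot_normE b : quot_norm le e b = (pp b + pp (- b)) / 2.
Proof.
apply: inf_min.
  exists ((pp (- b) - pp b) / 2) => //.
  rewrite ou_normE /NN pp_shift pp_neg_shift.
  have -> : pp b + (pp (- b) - pp b) / 2 = (pp b + pp (- b)) / 2 by field.
  have -> : pp (- b) - (pp (- b) - pp b) / 2 = (pp b + pp (- b)) / 2 by field.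
  by rewrite maxxx.
move=> _ [t _ <-]; rewrite ou_normE /NN pp_shift pp_neg_shift le_max.
case: (lerP ((pp (- b) - pp b) / 2) t) => h; apply/orP; [left|right]; lra.
Qed.

Lemma state_bound mu : is_state le e mu -> forall b, `|mu b| <= NN b.
Proof.
case=> madd mhom _ me opn b.
have hs : has_sup [set `|mu a| | a in [set a | ou_norm le e a <= 1]].
  apply: contrapT => /sup_out h; move: opn; rewrite /op_norm h => /eqP.
  by rewrite eq_sym oner_eq0.
rewrite /op_norm in opn.
apply/ler_addgt0Pr => eps eps0.
have k0 : 0 < NN b + eps by rewrite ltr_pwDr // NN_ge0.
have hb : ou_norm le e ((NN b + eps)^-1 *: b) <= 1.
  rewrite ou_normE /NN ge_max -scalerN !ppZ ?invr_gt0 //.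
  rewrite !(mulrC (NN b + eps)^-1) !ler_pdivrMr // !mul1r.
  by apply/andP; split; apply: (le_trans _ (ltW (ltr_pwDr eps0 (lexx _))));
    rewrite /NN le_max lexx ?orbT.
have H : `|mu ((NN b + eps)^-1 *: b)| <= 1.
  by rewrite -opn; apply: (sup_upper_bound hs); exists ((NN b + eps)^-1 *: b).
move: H; rewrite mhom normrM ger0_norm; last by rewrite invr_ge0 ltW.
by rewrite mulrC ler_pdivrMr // mul1r.
Qed.

Section HB.
Variable a : V.

Definition G0 : set (V * R) := [set xy | exists s : R, xy = (s *: a, s * pp a)].

Definition Gr (G : set (V * R)) : Prop :=
  [/\ G0 `<=` G,
      (forall x y x' y', G (x, y) -> G (x', y') -> G (x + x', y + y')),
      (forall t x y, G (x, y) -> G (t *: x, t * y)),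
      (forall x y y', G (x, y) -> G (x, y') -> y = y') &
      (forall x y, G (x, y) -> y <= pp x)].

Lemma Gr_G0 : Gr G0.
Proof.
split => //.
- move=> x y x' y' [s [-> ->]] [s' [-> ->]]; exists (s + s').
  by rewrite scalerDl mulrDl.
- move=> t x y [s [-> ->]]; exists (t * s); by rewrite scalerA mulrA.
- move=> x y y' [s [-> ->]] [s' [E ->]].
  have : (s - s') *: a = 0 by rewrite scalerBl E subrr.
  move/eqP; rewrite scaler_eq0 => /orP[/eqP h|/eqP ->].
    by rewrite (subr0_eq h).
  by rewrite pp0 !mulr0.
- move=> x y [s [-> ->]].
  case: (ltrgt0P s) => hs.
  + by rewrite ppZ.
  + have -> : s *: a = (- s) *: (- a) by rewrite scalerN scaleNr opprK.
    rewrite ppZ ?oppr_gt0 //.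
    have := pp_sum a; nra.
  + by rewrite hs scale0r pp0 mul0r.
Qed.


Lemma lmod_aux (x1 x2 u v : V) : x1 + u = x2 + v -> x2 - x1 = u - v.
Proof.
move=> H; rewrite -[x2](addrK v) -H.
by rewrite addrAC [x1 + u]addrC addrK.
Qed.

Lemma Gr_ext G z : Gr G -> (forall y, ~ G (z, y)) -> exists G', Gr G' /\ G `<` G'.
Proof.
case=> G0G Gadd Gsc Gfun Gdom Hz.
have G00 : G (0, 0) by apply: G0G; exists 0; rewrite scale0r mul0r.
pose C := [set w | exists x y, G (x, y) /\ w = y - pp (x - z)].
have key x y x' y' : G (x, y) -> G (x', y') -> y - pp (x - z) <= pp (x' + z) - y'.
  move=> h h'; have H1 := Gdom _ _ (Gadd _ _ _ _ h h').
  have H2 := ppD (x - z) (x' + z).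
  have E : x - z + (x' + z) = x + x' by rewrite addrACA addNr addr0.
  rewrite E in H2; lra.
have Cne : C !=set0 by exists (0 - pp (0 - z)); exists 0, 0.
have Cub : has_sup C.
  split => //; exists (pp (0 + z) - 0) => w [x [y [h ->]]]; exact: key.
pose c := sup C.
have c_ge x y : G (x, y) -> y - pp (x - z) <= c.
  by move=> h; apply: (sup_upper_bound Cub); exists x, y.
have c_le x y : G (x, y) -> c <= pp (x + z) - y.
  by move=> h; apply: ge_sup Cne _ => w [x0 [y0 [h0 ->]]]; exact: key.
pose G' := [set xy | exists x y s, G (x, y) /\ xy = (x + s *: z, y + s * c)].
exists G'; split; last first.
  split.
    move=> [x y] h; exists x, y, 0; split => //.
    by rewrite scale0r mul0r !addr0.
  move=> /(_ (z, c)) H; apply: (Hz c); apply: H.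
  by exists 0, 0, 1; rewrite scale1r mul1r !add0r.
split.
- move=> [x y] h; exists x, y, 0; split; first exact: G0G.
  by rewrite scale0r mul0r !addr0.
- move=> X Y X' Y' [x [y [s [h E]]]] [x' [y' [s' [h' E']]]].
  case: E => -> ->; case: E' => -> ->.
  exists (x + x'), (y + y'), (s + s'); split; first exact: Gadd.
  by rewrite scalerDl mulrDl addrACA [y + _ + _]addrACA.
- move=> t X Y [x [y [s [h E]]]]; case: E => -> ->.
  exists (t *: x), (t * y), (t * s); split; first exact: Gsc.
  by rewrite scalerDr scalerA mulrDr mulrA.
- move=> X Y Y' [x1 [y1 [s1 [h1 E1]]]] [x2 [y2 [s2 [h2 E2]]]].
  case: E1 => EX1 ->; case: E2 => EX2 ->.
  have H : x1 + s1 *: z = x2 + s2 *: z by rewrite -EX1 -EX2.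
  case: (eqVneq s1 s2) => [Es | Ns].
    subst s2; have Ex : x1 = x2 by apply: (addIr (s1 *: z)).
    by subst x2; rewrite (Gfun _ _ _ h1 h2).
  exfalso; have Hd := lmod_aux H; rewrite -scalerBl in Hd.
  have hn : G (x2 - x1, y2 - y1).
    by have := Gadd _ _ _ _ h2 (Gsc (-1) _ _ h1); rewrite scaleN1r mulN1r.
  have := Gsc (s1 - s2)^-1 _ _ hn; rewrite Hd scalerA mulVf ?scale1r.
    by apply: Hz.
  by rewrite subr_eq0.
- move=> X Y [x [y [s [h E]]]]; case: E => -> ->.
  case: (ltrgt0P s) => hs.
  + have H := c_le _ _ (Gsc s^-1 _ _ h).
    have -> : x + s *: z = s *: (s^-1 *: x + z).
      by rewrite scalerDr scalerA mulfV ?gt_eqF // scale1r.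
    rewrite ppZ //.
    have H2 : s * c <= s * (pp (s^-1 *: x + z) - s^-1 * y) by rewrite ler_pM2l.
    rewrite mulrBr mulrA mulfV ?gt_eqF // mul1r in H2; lra.
  + have hu : 0 < - s by rewrite oppr_gt0.
    have H := c_ge _ _ (Gsc (- s)^-1 _ _ h).
    have -> : x + s *: z = (- s) *: ((- s)^-1 *: x - z).
      by rewrite scalerDr scalerA mulfV ?gt_eqF // scale1r scalerN scaleNr opprK.
    rewrite ppZ //.
    have H2 : (- s) * ((- s)^-1 * y - pp ((- s)^-1 *: x - z)) <= (- s) * c.
      by rewrite ler_pM2l.
    rewrite mulrBr mulrA mulfV ?gt_eqF // mul1r in H2; lra.
  + by rewrite hs scale0r mul0r !addr0; exact: Gdom.
Qed.

Lemma HB_exists : exists mu : V -> R,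
  [/\ (forall b c, mu (b + c) = mu b + mu c), (forall t b, mu (t *: b) = t * mu b),
      (forall b, mu b <= pp b) & mu a = pp a].
Proof.
pose P := fun G : set (V * R) => G = set0 \/ Gr G.
have [A [PA Amax]] : exists A, P A /\ forall B, A `<` B -> ~ P B.
  apply: Zorn_bigcup => F FP Ftot.
  case: (pselect (exists xy, (\bigcup_(X in F) X) xy)) => [[xy0 [X FX Xxy]]|Hn]; last first.
    left; apply/seteqP; split => // xy H; apply: Hn; by exists xy.
  right.
  have GrX Y : F Y -> forall q, Y q -> Gr Y.
    by move=> FY q Yq; case: (FP _ FY) => // Y0; rewrite Y0 in Yq.
  split.
  - move=> q h; exists X => //; case: (GrX X FX _ Xxy) => G0X _ _ _ _; exact: G0X.
  - move=> x y x' y' [Y1 F1 h1] [Y2 F2 h2]; case: (Ftot _ _ F1 F2) => S.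
      exists Y2 => //; have [_ Ga _ _ _] := GrX _ F2 _ h2; apply: Ga => //; exact: S.
    exists Y1 => //; have [_ Ga _ _ _] := GrX _ F1 _ h1; apply: Ga => //; exact: S.
  - move=> t x y [Y FY h]; exists Y => //; have [_ _ Gs _ _] := GrX _ FY _ h; exact: Gs.
  - move=> x y y' [Y1 F1 h1] [Y2 F2 h2]; case: (Ftot _ _ F1 F2) => S.
      have [_ _ _ Gf _] := GrX _ F2 _ h2; exact: Gf (S _ h1) h2.
    have [_ _ _ Gf _] := GrX _ F1 _ h1; exact: Gf h1 (S _ h2).
  - move=> x y [Y FY h]; have [_ _ _ _ Gd] := GrX _ FY _ h; exact: Gd.
have GrA : Gr A.
  case: PA => // A0; exfalso; apply: (Amax G0); last by right; exact: Gr_G0.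
  rewrite A0; split => // /(_ (0 *: a, 0 * pp a)) H.
  by have // := H (ex_intro _ 0 erefl).
have tot x : exists y, A (x, y).
  apply: contrapT => nx.
  have [G' [GrG' AG']] := Gr_ext GrA (z := x) (fun y h => nx (ex_intro _ y h)).
  by apply: (Amax _ AG'); right.
case: GrA => G0A Aadd Asc Afun Adom.
pose mu x := proj1_sig (cid (tot x)).
have muP x : A (x, mu x) by rewrite /mu; case: cid.
exists mu; split.
- move=> b c; apply: (Afun (b + c)); first exact: muP.
  by apply: Aadd; exact: muP.
- move=> t b; apply: (Afun (t *: b)); first exact: muP.
  by apply: Asc; exact: muP.
- move=> b; exact: Adom (muP b).
- apply: (Afun a); first exact: muP.
  by apply: G0A; exists 1; rewrite scale1r mul1r.
Qed.

End HB.

Lemma pp_one : pp e = 1.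
Proof. by rewrite -{1}[e]scale1r pp_e. Qed.

Lemma pp_mone : pp (- e) = -1.
Proof. by rewrite -scaleN1r pp_e. Qed.

Lemma NN_e : NN e <= 1.
Proof. by rewrite /NN pp_one pp_mone ge_max; apply/andP; split; lra. Qed.

Lemma NN_t0 b : NN (b + ((pp (- b) - pp b) / 2) *: e) = (pp b + pp (- b)) / 2.
Proof.
rewrite /NN pp_shift pp_neg_shift.
have -> : pp b + (pp (- b) - pp b) / 2 = (pp b + pp (- b)) / 2 by field.
have -> : pp (- b) - (pp (- b) - pp b) / 2 = (pp b + pp (- b)) / 2 by field.
by rewrite maxxx.
Qed.

Lemma state_exists a : exists mu, is_state le e mu /\ mu a = pp a.
Proof.
have [mu [madd mhom mle ma]] := HB_exists a.
have mneg b : mu (- b) = - mu b by rewrite -scaleN1r mhom mulN1r.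
have mN b : `|mu b| <= NN b.
  rewrite ler_norml; apply/andP; split.
    rewrite lerNl -mneg; apply: (le_trans (mle _)); by rewrite /NN le_max lexx orbT.
  by apply: (le_trans (mle _)); rewrite /NN le_max lexx.
have me : mu e = 1.
  apply/le_anti/andP; split; first by rewrite -pp_one.
  by rewrite -lerN2 -mneg -pp_mone.
have Sne : [set `|mu b| | b in [set b | ou_norm le e b <= 1]] !=set0.
  by exists 1; exists e; [rewrite /= ou_normE; exact: NN_e | rewrite me normr1].
have Sub : ubound [set `|mu b| | b in [set b | ou_norm le e b <= 1]] 1.
  move=> _ [b hb <-]; apply: (le_trans (mN b)); by rewrite -ou_normE.
exists mu; split => //; split => //.
- move=> b eps eps0; exists eps => // c hc.
  have -> : mu c - mu b = mu (c - b) by rewrite madd mneg.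
  by apply: (le_lt_trans (mN _)); rewrite -ou_normE.
- rewrite /op_norm; apply/le_anti/andP; split; first exact: ge_sup.
  have hs : has_sup [set `|mu b| | b in [set b | ou_norm le e b <= 1]].
    by split => //; exists 1.
  apply: (sup_upper_bound hs); exists e; last by rewrite me normr1.
  by rewrite /= ou_normE; exact: NN_e.
Qed.

End Nondeg.
Lemma ou_norm_deg : ~ (le 0 e /\ ~ le e 0) -> forall b, ou_norm le e b = 0.
Proof.
move=> deg b; rewrite /ou_norm.
case: (pselect (le 0 e)) => e0.
  have e0' : le e 0 by apply: contrapT => ne; apply: deg.
  have E : e = 0 by apply: lanti.
  have hb : le b 0 by have [q hq] := lub b; rewrite E scaler0 in hq.
  have hb' : le 0 b.
    have [q hq] := lub (- b); rewrite E scaler0 in hq.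
    by have := ou_opp hq; rewrite oppr0 opprK.
  apply: inf_min; first by split => //; rewrite scale0r oppr0.
  by move=> x [].
set S := [set r | _].
have sub x : S x -> x = 0.
  move=> [x0 [h1 h2]]; apply/eqP; rewrite eq_le x0 andbT leNgt; apply/negP => xp.
  apply: e0; have h3 := ltrans h1 h2.
  have h4 := ladd (x *: e) h3; rewrite addNr -scalerDl in h4.
  have hx : 0 <= (x + x)^-1 by rewrite invr_ge0; lra.
  have := lscale hx h4; rewrite scaler0 scalerA mulVf ?scale1r //.
  by apply/eqP => hh; lra.
case: (pselect (S 0)) => S0.
  by apply: inf_min S0 _ => x Sx; rewrite (sub x Sx).
have -> : S = set0.
  by apply/seteqP; split => // x Sx; apply: S0; move: (Sx); rewrite (sub x Sx).
exact: inf0.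
Qed.

Section Lip.
Variable L : V -> R.
Hypothesis lipH : is_lip_seminorm e L.

Lemma L_e t : L (t *: e) = 0.
Proof. by case: lipH => _ _ H; apply/H; exists t. Qed.

Lemma L_ge0 b : 0 <= L b.
Proof.
case: lipH => Ladd Lhom _.
have h0 : L 0 = 0 by rewrite -(scale0r 0) Lhom normr0 mul0r.
have := Ladd b (- b); rewrite subrr h0 -scaleN1r Lhom normrN normr1 mul1r; lra.
Qed.

Lemma L_shift b t : L (b + t *: e) = L b.
Proof.
case: lipH => Ladd Lhom _.
apply/le_anti/andP; split.
  by have := Ladd b (t *: e); rewrite L_e addr0.
have := Ladd (b + t *: e) ((- t) *: e); rewrite L_e addr0 -addrA -scalerDl subrr scale0r addr0.
done.
Qed.

Lemma quot_LE b : quot_L e L b = L b.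
Proof.
apply: inf_min; first by exists 0 => //; rewrite scale0r addr0.
by move=> _ [t _ <-]; rewrite L_shift.
Qed.

Lemma main_sec (r : R) : 0 <= r ->
  ((forall mu nu : V -> R, is_state le e mu -> is_state le e nu ->
      (rhoL L mu nu <= (2 * r)%:E)%E) <->
   (forall a : V, quot_norm le e a <= r * quot_L e L a)).
Proof.
move=> r0.
case: (pselect (le 0 e /\ ~ le e 0)) => [[e0 ne0]|deg]; last first.
  have ouz := ou_norm_deg deg.
  have qn0 b : quot_norm le e b = 0.
    apply: inf_min; first by exists 0 => //; rewrite ouz.
    by move=> _ [t _ <-]; rewrite ouz.
  have nostate mu : ~ is_state le e mu.
    case=> madd mhom _ me; rewrite /op_norm.
    set S := [set _ | _ in _].
    case: (pselect (has_sup S)) => hs; last first.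
      by rewrite sup_out // => /eqP; rewrite eq_sym oner_eq0.
    move=> H2.
    have : `|mu (2 *: e)| <= sup S.
      apply: (sup_upper_bound hs); exists (2 *: e) => //.
      by change (ou_norm le e (2 *: e) <= 1); rewrite ouz ler01.
    by rewrite H2 mhom me mulr1 ger0_norm //; lra.
  split.
    by move=> _ b; rewrite qn0 quot_LE mulr_ge0 // L_ge0.
  by move=> _ mu nu smu; case: (nostate mu smu).
split.
- move=> H b; rewrite quot_normE // quot_LE.
  case: (eqVneq (L b) 0) => Lb.
    case: lipH => _ _ HL; have [t Et] := (HL b).1 Lb.
    rewrite Et pp_e // -scaleNr pp_e // -Et Lb; lra.
  have Lpos : 0 < L b by rewrite lt_def Lb L_ge0.
  have [mu [smu mua]] := state_exists e0 ne0 b.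
  have [nu [snu nub]] := state_exists e0 ne0 (- b).
  have H1 := H mu nu smu snu.
  have H2 : ((`|mu ((L b)^-1 *: b) - nu ((L b)^-1 *: b)|)%:E <= rhoL L mu nu)%E.
    apply: ereal_sup_ubound; exists ((L b)^-1 *: b) => //=.
    case: lipH => _ Lhom _; rewrite Lhom ger0_norm ?invr_ge0 ?(ltW Lpos) //.
    by rewrite mulVf ?gt_eqF.
  have := le_trans H2 H1; rewrite lee_fin.
  case: smu => _ mhom _ _ _; case: snu => _ nhom _ _ _.
  rewrite mhom nhom -mulrBr mua.
  have -> : nu b = - pp (- b) by rewrite -nub -scaleN1r nhom mulN1r opprK.
  rewrite opprK normrM ger0_norm ?invr_ge0 ?(ltW Lpos) // => H3.
  have H4 : (L b)^-1 * (pp b + pp (- b)) <= 2 * r.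
    apply: le_trans H3; rewrite ler_wpM2l ?invr_ge0 ?(ltW Lpos) //; exact: ler_norm.
  rewrite mulrC ler_pdivrMr // in H4; lra.
- move=> H mu nu smu snu; rewrite /rhoL; apply: ge_ereal_sup => _ [b hb <-].
  rewrite lee_fin.
  set t0 := (pp (- b) - pp b) / 2.
  have h := H b; rewrite quot_normE // quot_LE in h.
  have hN := NN_t0 e0 ne0 b; rewrite -/t0 in hN.
  have Hm := state_bound e0 ne0 smu (b + t0 *: e).
  have Hn := state_bound e0 ne0 snu (b + t0 *: e).
  case: smu => madd mhom _ me _; case: snu => nadd nhom _ ne _.
  have -> : mu b - nu b = mu (b + t0 *: e) - nu (b + t0 *: e).
    by rewrite madd nadd mhom nhom me ne; lra.
  have h5 := ler_normB (mu (b + t0 *: e)) (nu (b + t0 *: e)).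
  have h6 : r * L b <= r * 1 by rewrite ler_wpM2l.
  lra.
Qed.

End Lip.

End OU.

Theorem proposition2p2 (R : realType) (V : lmodType R)
    (le : V -> V -> Prop) (e : V) (L : V -> R) (r : R) :
  is_order_unit_space le e -> is_lip_seminorm e L -> 0 <= r ->
  ((forall mu nu : V -> R, is_state le e mu -> is_state le e nu ->
      (rhoL L mu nu <= (2 * r)%:E)%E) <->
   (forall a : V, quot_norm le e a <= r * quot_L e L a)).
Proof.
move=> ouH lipH r0; exact: (@main_sec R V le e ouH L lipH r r0).
Qed.
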